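(* Let $S$ be an inverse semigroup with zero. Two distinct non-zero elements $x,y\in S$ are adjacent in $\mathcal{P}_L(S)$ if and only if $xy^{-1}\neq 0$.
   Context: For an inverse semigroup $S$, $x^{-1}$ denotes the unique inverse of $x$ (the unique $y$ with $xyx=x$, $yxy=y$). For $a\in S$, $S^1a=\{sa:s\in S\}\cup\{a\}$. $\mathcal{P}_L(S)$ is the simple graph whose vertices are the non-zero elements of $S$, two distinct vertices $a,b$ being adjacent iff $S^1a\cap S^1b$ contains an element different from $0$. *)

(* Defs.v *)
From Stdlib Require Import ClassicalEpsilon.

Record InvSemigroup0 := {
  car :> Type;
  mul : car -> car -> car;
  zero : car;
  mulA : forall x y z, mul x (mul y z) = mul (mul x y) z;
  mul0s : forall x, mul zero x = zero;
  muls0 : forall x, mul x zero = zero;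
  inv_unique : forall x : car, exists! y : car,
      mul (mul x y) x = x /\ mul (mul y x) y = y
}.

Definition inv (S : InvSemigroup0) (x : S) : S :=
  proj1_sig (constructive_indefinite_description _ (inv_unique S x)).

(* c ∈ S^1 a = {s a : s ∈ S} ∪ {a} *)
Definition inS1 (S : InvSemigroup0) (a c : S) : Prop :=
  (exists s : S, c = mul S s a) \/ c = a.

Definition PL_adj (S : InvSemigroup0) (a b : S) : Prop :=
  a <> zero S /\ b <> zero S /\ a <> b /\
  exists c : S, c <> zero S /\ inS1 S a c /\ inS1 S b c.

(* Main.v *)
Require Import Defs.
From Stdlib Require Import ClassicalEpsilon.
Section X.
Variable S : InvSemigroup0.
Local Notation "a * b" := (mul S a b).
Local Notation "0" := (zero S).

Lemma inv_spec (x : S) : (x * inv S x) * x = x /\ (inv S x * x) * inv S x = inv S x.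
Proof.
  unfold inv. destruct (constructive_indefinite_description _ _) as [y Hy]; simpl; destruct Hy as [H _]; exact H.
Qed.

Lemma inv_uniq (x y z : S) : ((x*y)*x = x /\ (y*x)*y = y) -> ((x*z)*x=x /\ (z*x)*z=z) -> y = z.
Proof.
  intros Hy Hz. destruct (inv_unique S x) as [w [_ Hw]].
  rewrite <- (Hw y Hy), <- (Hw z Hz). reflexivity.
Qed.

Lemma idl (e w : S) : e * e = e -> e * (e * w) = e * w.
Proof. intros H. rewrite mulA, H. reflexivity. Qed.

Lemma idem_mul (e f : S) : e * e = e -> f * f = f -> (e * f) * (e * f) = e * f.
Proof.
  intros He Hf. set (a := inv S (e*f)).
  destruct (inv_spec (e*f)) as [H1 H2]. fold a in H1, H2.
  repeat rewrite <- mulA in H1, H2.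
  assert (H2w : forall w, a*(e*(f*(a*w))) = a*w).
  { intro w. transitivity ((a*(e*(f*a)))*w); [repeat rewrite <- mulA; reflexivity | rewrite H2; reflexivity]. }
  assert (Ha : a = f * (a * e)).
  { apply (inv_uniq (e*f)).
    - split; repeat rewrite <- mulA; auto.
    - split; repeat rewrite <- mulA.
      + rewrite (idl f _ Hf), (idl e _ He). exact H1.
      + rewrite (idl e _ He), (idl f _ Hf), H2w. reflexivity. }
  assert (Haa : a * a = a).
  { transitivity ((f*(a*e))*(f*(a*e))); [rewrite <- Ha; reflexivity|]. repeat rewrite <- mulA. rewrite H2w. symmetry; exact Ha. }
  assert (Ea : e * f = a).
  { apply (inv_uniq a).
    - split; repeat rewrite <- mulA; auto.
    - split; rewrite !Haa; reflexivity. }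
  rewrite Ea. exact Haa.
Qed.

Lemma idem_comm (e f : S) : e * e = e -> f * f = f -> e * f = f * e.
Proof.
  intros He Hf.
  pose proof (idem_mul e f He Hf) as P. pose proof (idem_mul f e Hf He) as Q.
  apply (inv_uniq (e*f)).
  - split; rewrite P; exact P.
  - split; repeat rewrite <- mulA.
    + rewrite (idl f _ Hf), (idl e _ He). repeat rewrite <- mulA in P. exact P.
    + rewrite (idl e _ He), (idl f _ Hf). repeat rewrite <- mulA in Q. exact Q.
Qed.

Lemma idem_ii (x : S) : (inv S x * x) * (inv S x * x) = inv S x * x.
Proof. destruct (inv_spec x) as [_ H]. rewrite mulA, H. reflexivity. Qed.


Lemma right_id (x c : S) : inS1 S x c -> c * (inv S x * x) = c.
Proof.
  destruct (inv_spec x) as [H _].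
  intros [[s ->] | ->].
  - rewrite <- mulA, (mulA S x), H. reflexivity.
  - rewrite mulA. exact H.
Qed.

End X.

Theorem mainTheorem10 (S : InvSemigroup0) (x y : S) :
  x <> zero S -> y <> zero S -> x <> y ->
  (PL_adj S x y <-> mul S x (inv S y) <> zero S).
Proof.
  intros Hx Hy Hxy.
  pose proof (idem_comm S _ _ (idem_ii S x) (idem_ii S y)) as C.
  destruct (inv_spec S x) as [Ix _]. destruct (inv_spec S y) as [Iy Iy'].
  split.
  - intros (_ & _ & _ & c & Hc & Cx & Cy) E. apply Hc.
    rewrite <- (right_id S x c Cx), <- (right_id S y c Cy).
    rewrite <- mulA, <- C, <- (mulA S (inv S x)), (mulA S x), E, mul0s, muls0, muls0.
    reflexivity.
  - intros E. split; [exact Hx|split; [exact Hy|split; [exact Hxy|]]].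
    exists (mul S (mul S x (inv S y)) y). split; [|split].
    + intros Z. apply E. rewrite <- Iy', !mulA, Z, mul0s. reflexivity.
    + left. exists (mul S x (mul S (inv S y) (mul S y (inv S x)))).
      rewrite <- !mulA. rewrite (mulA S (inv S y) y), <- C.
      rewrite !mulA, Ix. reflexivity.
    + left. exists (mul S x (inv S y)). reflexivity.
Qed.
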